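(* Let $h_6$ be the real two-photon Lie algebra. A Lie bialgebra structure $\delta$ on $h_6$ satisfies $\delta(A_+)=0$ if and only if there exist real numbers $a_1,a_3,a_4,a_5,b_3,c_1$ with $$a_1a_4+a_5c_1=0$$ such that $\delta(X)=[1\otimes X+X\otimes 1,\,r]$ for all $X\in h_6$, where $$r=a_1\,N\wedge A_++a_3\,A_+\wedge M+a_4\,B_+\wedge M+a_5\,A_+\wedge B_++b_3\,A_-\wedge M+c_1\,(N\wedge M-A_+\wedge A_-).$$ Explicitly, $\delta(A_+)=\delta(M)=0$ and $\delta(N)=a_1N\wedge A_++a_3A_+\wedge M+2a_4B_+\wedge M+3a_5A_+\wedge B_+-b_3A_-\wedge M$, $\delta(A_-)=a_1(N\wedge M-A_+\wedge A_-)+2a_4A_+\wedge M-a_5B_+\wedge M+2c_1A_-\wedge M$, $\delta(B_+)=2a_1A_+\wedge B_+-2b_3A_+\wedge M-2c_1B_+\wedge M$, $\delta(B_-)=2a_1(N\wedge A_--A_+\wedge B_-)+2a_3A_-\wedge M+4a_4N\wedge M-2a_5(2N\wedge A_+-A_-\wedge B_+-A_+\wedge M)+2c_1B_-\wedge M$. Moreover, $r$ satisfies the classical Yang–Baxter equation $[[r,r]]=0$ (non-standard case) if and only if $a_1b_3-c_1^2=0$, and otherwise it is standard.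
   Context: The two-photon Lie algebra $h_6$ is the real Lie algebra with basis $\{N,A_+,A_-,B_+,B_-,M\}$ and brackets $[N,A_+]=A_+$, $[N,A_-]=-A_-$, $[A_-,A_+]=M$, $[N,B_+]=2B_+$, $[N,B_-]=-2B_-$, $[B_-,B_+]=4N+2M$, $[A_+,B_-]=-2A_-$, $[A_+,B_+]=0$, $[A_-,B_+]=2A_+$, $[A_-,B_-]=0$, and $M$ central. A Lie bialgebra structure on a Lie algebra $g$ is a linear map $\delta:g\to g\otimes g$ which is a 1-cocycle, i.e. $\delta([X,Y])=[\delta(X),1\otimes Y+Y\otimes 1]+[1\otimes X+X\otimes 1,\delta(Y)]$, and whose dual map $g^*\otimes g^*\to g^*$ is a Lie bracket. For $r=\sum r^{ij}X_i\otimes X_j\in g\wedge g$, the Schouten bracket is $[[r,r]]=[r_{12},r_{13}]+[r_{12},r_{23}]+[r_{13},r_{23}]$ with $r_{12}=\sum r^{ij}X_i\otimes X_j\otimes 1$, $r_{13}=\sum r^{ij}X_i\otimes 1\otimes X_j$, $r_{23}=\sum r^{ij}1\otimes X_i\otimes X_j$. Here $X\wedge Y=X\otimes Y-Y\otimes X$. *)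

(* Defs.v *)
(* The real Lie algebra h6 is modelled on row vectors 'rV[R]_6
   over an arbitrary real field R (coordinates in the basis N,A+,A-,B+,B-,M),
   g (x) g as 6x6 matrices (entry (i,j) = coefficient of X_i (x) X_j),
   g (x) g (x) g as functions 'I_6 -> 'I_6 -> 'I_6 -> R. *)
From HB Require Import structures.
From mathcomp Require Import all_boot all_order all_algebra.
Set Implicit Arguments. Unset Strict Implicit. Unset Printing Implicit Defensive.
Import Order.TTheory GRing.Theory Num.Theory.
Local Open Scope ring_scope.

Section H6.
Variable R : realFieldType.

Definition g := 'rV[R]_6.
Definition gg := 'M[R]_6.

Definition iN  : 'I_6 := @Ordinal 6 0 isT.
Definition iAp : 'I_6 := @Ordinal 6 1 isT.
Definition iAm : 'I_6 := @Ordinal 6 2 isT.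
Definition iBp : 'I_6 := @Ordinal 6 3 isT.
Definition iBm : 'I_6 := @Ordinal 6 4 isT.
Definition iM  : 'I_6 := @Ordinal 6 5 isT.

Definition e (k : 'I_6) : g := delta_mx 0 k.
Definition N  := e iN.
Definition Ap := e iAp.
Definition Am := e iAm.
Definition Bp := e iBp.
Definition Bm := e iBm.
Definition M  := e iM.

Definition brb (i j : 'I_6) : g :=
  match nat_of_ord i, nat_of_ord j with
  | 0, 1 => Ap | 1, 0 => - Ap
  | 0, 2 => - Am | 2, 0 => Am
  | 2, 1 => M | 1, 2 => - M
  | 0, 3 => 2%:R *: Bp | 3, 0 => - (2%:R *: Bp)
  | 0, 4 => - (2%:R *: Bm) | 4, 0 => 2%:R *: Bm
  | 4, 3 => 4%:R *: N + 2%:R *: M | 3, 4 => - (4%:R *: N + 2%:R *: M)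
  | 1, 4 => - (2%:R *: Am) | 4, 1 => 2%:R *: Am
  | 2, 3 => 2%:R *: Ap | 3, 2 => - (2%:R *: Ap)
  | _, _ => 0
  end.

Definition c (i j k : 'I_6) : R := brb i j 0 k.

Definition bracket (x y : g) : g :=
  \sum_(i < 6) \sum_(j < 6) (x 0 i * y 0 j) *: brb i j.

Definition adm (x : g) (i k : 'I_6) : R := \sum_(m < 6) x 0 m * c m i k.

(* [1 (x) X + X (x) 1, t] = (ad_X (x) 1 + 1 (x) ad_X) t on g (x) g *)
Definition act2 (x : g) (t : gg) : gg :=
  \matrix_(a, b) (\sum_(i < 6) adm x i a * t i b + \sum_(j < 6) t a j * adm x j b).

Definition act3 (x : g) (T : 'I_6 -> 'I_6 -> 'I_6 -> R) : 'I_6 -> 'I_6 -> 'I_6 -> R :=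
  fun a b d => \sum_(i < 6) adm x i a * T i b d + \sum_(i < 6) adm x i b * T a i d
             + \sum_(i < 6) adm x i d * T a b i.

Definition wedge (u v : g) : gg := u^T *m v - v^T *m u.

Definition cocycle (delta : g -> gg) : Prop :=
  forall x y : g, delta (bracket x y) = act2 x (delta y) - act2 y (delta x).

(* dual map g* (x) g* -> g*, functionals encoded as coordinate row vectors
   in the dual basis: (dualbr f h)(X_i) = (f (x) h)(delta X_i) *)
Definition dualbr (delta : g -> gg) (f h : g) : g :=
  \row_i (\sum_(j < 6) \sum_(k < 6) f 0 j * h 0 k * delta (e i) j k).

(* the dual map is a Lie bracket (it is bilinear by construction) *)
Definition dual_is_Lie (delta : g -> gg) : Prop :=
  (forall f h : g, dualbr delta f h = - dualbr delta h f) /\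
  (forall f h k : g, dualbr delta (dualbr delta f h) k + dualbr delta (dualbr delta h k) f
                     + dualbr delta (dualbr delta k f) h = 0).

Definition lie_bialgebra (delta : {linear g -> gg}) : Prop :=
  cocycle delta /\ dual_is_Lie delta.

(* Schouten bracket [[r,r]] = [r12,r13] + [r12,r23] + [r13,r23] *)
Definition schouten (r : gg) : 'I_6 -> 'I_6 -> 'I_6 -> R :=
  fun a b d =>
    \sum_(i < 6) \sum_(k < 6) r i b * r k d * c i k a
  + \sum_(j < 6) \sum_(k < 6) r a j * r k d * c j k b
  + \sum_(j < 6) \sum_(l < 6) r a j * r b l * c j l d.

Definition cybe (r : gg) : Prop := forall a b d, schouten r a b d = 0.

Definition standard (r : gg) : Prop :=
  ~ cybe r /\ forall (x : g) a b d, act3 x (schouten r) a b d = 0.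

Definition rmat (a1 a3 a4 a5 b3 c1 : R) : gg :=
  a1 *: wedge N Ap + a3 *: wedge Ap M + a4 *: wedge Bp M + a5 *: wedge Ap Bp
  + b3 *: wedge Am M + c1 *: (wedge N M - wedge Ap Am).

End H6.

(* Main.v *)
Require Import Defs.
From HB Require Import structures.
From mathcomp Require Import all_boot all_order all_algebra.
From mathcomp Require Import ring lra.
Import Order.TTheory GRing.Theory Num.Theory.
Local Open Scope ring_scope.
Set Implicit Arguments. Unset Strict Implicit.

Section S.
Variable R : realFieldType.

Lemma sum6 (F : 'I_6 -> R) : \sum_(i < 6) F i = F iN + F iAp + F iAm + F iBp + F iBm + F iM.
Proof. by rewrite !big_ord_recr big_ord0 /= add0r; congr (_ + _ + _ + _ + _ + _); apply: congr1; apply: val_inj. Qed.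

Lemma ord6P (P : 'I_6 -> Prop) : P iN -> P iAp -> P iAm -> P iBp -> P iBm -> P iM -> forall i, P i.
Proof.
move=> h0 h1 h2 h3 h4 h5 [[|[|[|[|[|[|n]]]]]] Hi] //.
- by rewrite (_ : Ordinal Hi = iN) //; apply: val_inj.
- by rewrite (_ : Ordinal Hi = iAp) //; apply: val_inj.
- by rewrite (_ : Ordinal Hi = iAm) //; apply: val_inj.
- by rewrite (_ : Ordinal Hi = iBp) //; apply: val_inj.
- by rewrite (_ : Ordinal Hi = iBm) //; apply: val_inj.
- by rewrite (_ : Ordinal Hi = iM) //; apply: val_inj.
Qed.

Definition oval (x : option R) : R := if x is Some a then a else 0.
Definition omul (x y : option R) : option R :=
  match x, y with Some a, Some b => Some (a * b) | _, _ => None end.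
Definition oadd (x y : option R) : option R :=
  match x, y with None, _ => y | Some a, None => Some a | Some a, Some b => Some (a + b) end.
Definition oneg (x : option R) : option R := if x is Some a then Some (- a) else None.
Definition osum (F : 'I_6 -> option R) : option R :=
  oadd (F iN) (oadd (F iAp) (oadd (F iAm) (oadd (F iBp) (oadd (F iBm) (F iM))))).

Lemma omulE x y : oval (omul x y) = oval x * oval y.
Proof. by case: x => [a|]; case: y => [b|] //=; rewrite ?mulr0 ?mul0r. Qed.
Lemma oaddE x y : oval (oadd x y) = oval x + oval y.
Proof. by case: x => [a|]; case: y => [b|] //=; rewrite ?addr0 ?add0r. Qed.
Lemma onegE x : oval (oneg x) = - oval x.
Proof. by case: x => [a|] //=; rewrite oppr0. Qed.
Lemma osumE F : oval (osum F) = \sum_(i < 6) oval (F i).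
Proof. by rewrite sum6 /osum !oaddE !addrA. Qed.

Definition ctabO (i j k : nat) : option R :=
  match i, j, k with
  | 0, 1, 1 => Some (1)
  | 0, 2, 2 => Some ((-1))
  | 0, 3, 3 => Some (2%:R)
  | 0, 4, 4 => Some ((-2%:R))
  | 1, 0, 1 => Some ((-1))
  | 1, 2, 5 => Some ((-1))
  | 1, 4, 2 => Some ((-2%:R))
  | 2, 0, 2 => Some (1)
  | 2, 1, 5 => Some (1)
  | 2, 3, 1 => Some (2%:R)
  | 3, 0, 3 => Some ((-2%:R))
  | 3, 2, 1 => Some ((-2%:R))
  | 3, 4, 0 => Some ((-4%:R))
  | 3, 4, 5 => Some ((-2%:R))
  | 4, 0, 4 => Some (2%:R)
  | 4, 1, 2 => Some (2%:R)
  | 4, 3, 0 => Some (4%:R)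
  | 4, 3, 5 => Some (2%:R)
  | _, _, _ => None
  end.

Definition rtabO (a1 a3 a4 a5 b3 c1 : R) (i j : nat) : option R :=
  match i, j with
  | 0, 1 => Some ((1 * a1))
  | 0, 5 => Some ((1 * c1))
  | 1, 0 => Some (((-1) * a1))
  | 1, 2 => Some (((-1) * c1))
  | 1, 3 => Some ((1 * a5))
  | 1, 5 => Some ((1 * a3))
  | 2, 1 => Some ((1 * c1))
  | 2, 5 => Some ((1 * b3))
  | 3, 1 => Some (((-1) * a5))
  | 3, 5 => Some ((1 * a4))
  | 5, 0 => Some (((-1) * c1))
  | 5, 1 => Some (((-1) * a3))
  | 5, 2 => Some (((-1) * b3))
  | 5, 3 => Some (((-1) * a4))
  | _, _ => None
  end.

Definition dtabO (a1 a3 a4 a5 b3 c1 : R) (k i j : nat) : option R :=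
  match k, i, j with
  | 0, 0, 1 => Some ((1 * a1))
  | 0, 1, 0 => Some (((-1) * a1))
  | 0, 1, 3 => Some ((3%:R * a5))
  | 0, 1, 5 => Some ((1 * a3))
  | 0, 2, 5 => Some (((-1) * b3))
  | 0, 3, 1 => Some (((-3%:R) * a5))
  | 0, 3, 5 => Some ((2%:R * a4))
  | 0, 5, 1 => Some (((-1) * a3))
  | 0, 5, 2 => Some ((1 * b3))
  | 0, 5, 3 => Some (((-2%:R) * a4))
  | 2, 0, 5 => Some ((1 * a1))
  | 2, 1, 2 => Some (((-1) * a1))
  | 2, 1, 5 => Some ((2%:R * a4))
  | 2, 2, 1 => Some ((1 * a1))
  | 2, 2, 5 => Some ((2%:R * c1))
  | 2, 3, 5 => Some (((-1) * a5))
  | 2, 5, 0 => Some (((-1) * a1))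
  | 2, 5, 1 => Some (((-2%:R) * a4))
  | 2, 5, 2 => Some (((-2%:R) * c1))
  | 2, 5, 3 => Some ((1 * a5))
  | 3, 1, 3 => Some ((2%:R * a1))
  | 3, 1, 5 => Some (((-2%:R) * b3))
  | 3, 3, 1 => Some (((-2%:R) * a1))
  | 3, 3, 5 => Some (((-2%:R) * c1))
  | 3, 5, 1 => Some ((2%:R * b3))
  | 3, 5, 3 => Some ((2%:R * c1))
  | 4, 0, 1 => Some (((-4%:R) * a5))
  | 4, 0, 2 => Some ((2%:R * a1))
  | 4, 0, 5 => Some ((4%:R * a4))
  | 4, 1, 0 => Some ((4%:R * a5))
  | 4, 1, 4 => Some (((-2%:R) * a1))
  | 4, 1, 5 => Some ((2%:R * a5))
  | 4, 2, 0 => Some (((-2%:R) * a1))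
  | 4, 2, 3 => Some ((2%:R * a5))
  | 4, 2, 5 => Some ((2%:R * a3))
  | 4, 3, 2 => Some (((-2%:R) * a5))
  | 4, 4, 1 => Some ((2%:R * a1))
  | 4, 4, 5 => Some ((2%:R * c1))
  | 4, 5, 0 => Some (((-4%:R) * a4))
  | 4, 5, 1 => Some (((-2%:R) * a5))
  | 4, 5, 2 => Some (((-2%:R) * a3))
  | 4, 5, 4 => Some (((-2%:R) * c1))
  | _, _, _ => None
  end.

Definition stabO (P Q : R) (a b d : nat) : option R :=
  match a, b, d with
  | 1, 2, 5 => Some (1 * P)
  | 1, 3, 5 => Some ((-2%:R) * Q)
  | 1, 5, 2 => Some ((-1) * P)
  | 1, 5, 3 => Some (2%:R * Q)
  | 2, 1, 5 => Some ((-1) * P)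
  | 2, 5, 1 => Some (1 * P)
  | 3, 1, 5 => Some (2%:R * Q)
  | 3, 5, 1 => Some ((-2%:R) * Q)
  | 5, 1, 2 => Some (1 * P)
  | 5, 1, 3 => Some ((-2%:R) * Q)
  | 5, 2, 1 => Some ((-1) * P)
  | 5, 3, 1 => Some (2%:R * Q)
  | _, _, _ => None
  end.

Definition ctab i j k := oval (ctabO i j k).
Definition rtab (a1 a3 a4 a5 b3 c1 : R) i j := oval (rtabO a1 a3 a4 a5 b3 c1 i j).
Definition dtab (a1 a3 a4 a5 b3 c1 : R) k i j := oval (dtabO a1 a3 a4 a5 b3 c1 k i j).
Definition stab (P Q : R) a b d := oval (stabO P Q a b d).

Lemma cE i j k : c R i j k = ctab i j k.
Proof.
elim/ord6P: i; elim/ord6P: j; elim/ord6P: k; rewrite /c /brb /ctab /= ?mxE /=.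
all: try ring.
Qed.

Lemma rmatE (a1 a3 a4 a5 b3 c1 : R) i j : rmat a1 a3 a4 a5 b3 c1 i j = rtab a1 a3 a4 a5 b3 c1 i j.
Proof.
rewrite /rmat /wedge !mxE !big_ord1 !mxE.
elim/ord6P: i; elim/ord6P: j; rewrite /rtab /=.
all: ring.
Qed.

Lemma admE k l a : adm (e R k) l a = c R k l a.
Proof. rewrite /adm sum6 !mxE; elim/ord6P: k => /=; ring. Qed.

Lemma act2eE k (t : gg R) a b :
  act2 (e R k) t a b = \sum_(l < 6) c R k l a * t l b + \sum_(l < 6) t a l * c R k l b.
Proof. rewrite /act2 mxE; congr (_ + _); apply: eq_bigr => l _; by rewrite admE. Qed.

Lemma dtabE (a1 a3 a4 a5 b3 c1 : R) (k a b : 'I_6) :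
  act2 (e R k) (rmat a1 a3 a4 a5 b3 c1) a b = dtab a1 a3 a4 a5 b3 c1 k a b.
Proof.
rewrite act2eE !sum6 !cE !rmatE.
elim/ord6P: k; elim/ord6P: a; elim/ord6P: b; rewrite /dtab /ctab /rtab /=.
all: ring.
Qed.

Lemma solveD (D : 'I_6 -> 'I_6 -> 'I_6 -> R)
  (HE : forall i j a b, \sum_(k < 6) c R i j k * D k a b =
     (\sum_(l < 6) c R i l a * D j l b + \sum_(l < 6) D j a l * c R i l b)
   - (\sum_(l < 6) c R j l a * D i l b + \sum_(l < 6) D i a l * c R j l b))
  (Hsk : forall k a b, D k a b = - D k b a) (H1 : forall a b, D iAp a b = 0) :
  forall k a b, D k a b = dtab (D iN iN iAp) (D iN iAp iM) (D iN iBp iM / 2%:R)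
      (D iN iAp iBp / 3%:R) (- D iN iAm iM) (D iAm iAm iM / 2%:R) k a b.
Proof.
have h004 : D iN iN iBm = 0.
{ have E := HE iN iAp iN iAm. have A1 := H1 iN iAm.
  rewrite !sum6 !cE /ctab /= in E. clear - E A1. lra. }
have h002 : D iN iN iAm = 0.
{ have E := HE iN iAp iN iM. have A1 := H1 iN iM.
  rewrite !sum6 !cE /ctab /= in E. clear - E A1. lra. }
have h014 : D iN iAp iBm = 0.
{ have E := HE iN iAp iAp iAm. have A2 := H1 iAp iAm.
  rewrite !sum6 !cE /ctab /= in E. clear - E A2 h002. lra. }
have h003 : D iN iN iBp = 0.
{ have E := HE iN iAp iAp iBp. have A1 := H1 iAp iBp.
  rewrite !sum6 !cE /ctab /= in E. clear - E A1. lra. }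
have h034 : D iN iBp iBm = 0.
{ have E := HE iN iAp iAm iBp. have A0 := Hsk iN iBm iBp. have A1 := H1 iAm iBp.
  rewrite !sum6 !cE /ctab /= in E. clear - E A0 A1. lra. }
have h045 : D iN iBm iM = 0.
{ have E := HE iN iAp iAm iM. have A0 := Hsk iN iAm iAm. have A2 := H1 iAm iM.
  rewrite !sum6 !cE /ctab /= in E. clear - E A0 A2. lra. }
have h023 : D iN iAm iBp = 0.
{ have E := HE iN iAp iBp iM. have A0 := Hsk iN iBp iAm. have A1 := H1 iBp iM.
  rewrite !sum6 !cE /ctab /= in E. clear - E A0 A1. lra. }
have h024 : D iN iAm iBm = 0.
{ have E := HE iN iAp iBm iM. have A0 := Hsk iN iBm iAm. have A1 := H1 iBm iM.
  rewrite !sum6 !cE /ctab /= in E. clear - E A0 A1. lra. }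
have h201 : D iAm iN iAp = 0.
{ have E := HE iN iAm iN iAp. 
  rewrite !sum6 !cE /ctab /= in E. clear - E h003. lra. }
have h203 : D iAm iN iBp = 0.
{ have E := HE iN iAm iN iBp. 
  rewrite !sum6 !cE /ctab /= in E. clear - E . lra. }
have h204 : D iAm iN iBm = 0.
{ have E := HE iN iAm iN iBm. 
  rewrite !sum6 !cE /ctab /= in E. clear - E . lra. }
have h205 : D iAm iN iM = 1 * D iN iN iAp.
{ have E := HE iN iAm iN iM. 
  rewrite !sum6 !cE /ctab /= in E. clear - E . lra. }
have h212 : D iAm iAp iAm = (-1) * D iN iN iAp.
{ have E := HE iN iAm iAp iAm. have A0 := Hsk iN iAp iN. have A1 := Hsk iN iBp iAm.
  rewrite !sum6 !cE /ctab /= in E. clear - E A0 A1 h023. lra. }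
have h213 : D iAm iAp iBp = 0.
{ have E := HE iN iAm iAp iBp. have A0 := Hsk iN iBp iBp.
  rewrite !sum6 !cE /ctab /= in E. clear - E A0. lra. }
have h215 : D iAm iAp iM = 1 * D iN iBp iM.
{ have E := HE iN iAm iAp iM. have A0 := Hsk iN iAp iAp.
  rewrite !sum6 !cE /ctab /= in E. clear - E A0. lra. }
have h223 : D iAm iAm iBp = 0.
{ have E := HE iN iAm iAm iBp. 
  rewrite !sum6 !cE /ctab /= in E. clear - E h003. lra. }
have h224 : D iAm iAm iBm = 0.
{ have E := HE iN iAm iAm iBm. 
  rewrite !sum6 !cE /ctab /= in E. clear - E h004. lra. }
have h234 : D iAm iBp iBm = 0.
{ have E := HE iN iAm iBp iBm. 
  rewrite !sum6 !cE /ctab /= in E. clear - E . lra. }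
have h235 : D iAm iBp iM = ((-1) / 3%:R) * D iN iAp iBp.
{ have E := HE iN iAm iBp iM. have A0 := Hsk iN iBp iAp.
  rewrite !sum6 !cE /ctab /= in E. clear - E A0. lra. }
have h245 : D iAm iBm iM = 0.
{ have E := HE iN iAm iBm iM. have A0 := Hsk iN iBm iAp.
  rewrite !sum6 !cE /ctab /= in E. clear - E A0 h014. lra. }
have h301 : D iBp iN iAp = 0.
{ have E := HE iN iBp iN iAp. have A1 := Hsk iN iBm iAp.
  rewrite !sum6 !cE /ctab /= in E. clear - E A1 h002 h014. lra. }
have h302 : D iBp iN iAm = 0.
{ have E := HE iN iBp iN iAm. have A0 := Hsk iN iBm iAm.
  rewrite !sum6 !cE /ctab /= in E. clear - E A0 h024. lra. }
have h304 : D iBp iN iBm = 0.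
{ have E := HE iN iBp iN iBm. have A0 := Hsk iN iBm iBm.
  rewrite !sum6 !cE /ctab /= in E. clear - E A0. lra. }
have h305 : D iBp iN iM = 0.
{ have E := HE iN iBp iN iM. 
  rewrite !sum6 !cE /ctab /= in E. clear - E h004 h045. lra. }
have h312 : D iBp iAp iAm = 0.
{ have E := HE iN iBp iAp iAm. have A0 := Hsk iN iAm iAm.
  rewrite !sum6 !cE /ctab /= in E. clear - E A0. lra. }
have h313 : D iBp iAp iBp = 2%:R * D iN iN iAp.
{ have E := HE iN iBp iAp iBp. have A0 := Hsk iN iAp iN.
  rewrite !sum6 !cE /ctab /= in E. clear - E A0 h023. lra. }
have h314 : D iBp iAp iBm = 0.
{ have E := HE iN iBp iAp iBm. 
  rewrite !sum6 !cE /ctab /= in E. clear - E h024. lra. }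
have h315 : D iBp iAp iM = 2%:R * D iN iAm iM.
{ have E := HE iN iBp iAp iM. 
  rewrite !sum6 !cE /ctab /= in E. clear - E h014. lra. }
have h323 : D iBp iAm iBp = 0.
{ have E := HE iN iBp iAm iBp. have A0 := Hsk iN iAm iN.
  rewrite !sum6 !cE /ctab /= in E. clear - E A0 h002. lra. }
have h324 : D iBp iAm iBm = 0.
{ have E := HE iN iBp iAm iBm. 
  rewrite !sum6 !cE /ctab /= in E. clear - E . lra. }
have h325 : D iBp iAm iM = 0.
{ have E := HE iN iBp iAm iM. 
  rewrite !sum6 !cE /ctab /= in E. clear - E h024. lra. }
have h334 : D iBp iBp iBm = 0.
{ have E := HE iN iBp iBp iBm. 
  rewrite !sum6 !cE /ctab /= in E. clear - E h004. lra. }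
have h005 : D iN iN iM = 0.
{ have E := HE iN iBp iBp iM. 
  rewrite !sum6 !cE /ctab /= in E. clear - E h034. lra. }
have h345 : D iBp iBm iM = 0.
{ have E := HE iN iBp iBm iM. have A0 := Hsk iN iBm iBm.
  rewrite !sum6 !cE /ctab /= in E. clear - E A0. lra. }
have h401 : D iBm iN iAp = ((-4%:R) / 3%:R) * D iN iAp iBp.
{ have E := HE iN iBm iN iAp. have A0 := Hsk iN iBp iAp.
  rewrite !sum6 !cE /ctab /= in E. clear - E A0. lra. }
have h402 : D iBm iN iAm = 2%:R * D iN iN iAp.
{ have E := HE iN iBm iN iAm. have A1 := Hsk iN iBp iAm.
  rewrite !sum6 !cE /ctab /= in E. clear - E A1 h023. lra. }
have h403 : D iBm iN iBp = 0.
{ have E := HE iN iBm iN iBp. have A0 := Hsk iN iBp iBp.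
  rewrite !sum6 !cE /ctab /= in E. clear - E A0. lra. }
have h405 : D iBm iN iM = 2%:R * D iN iBp iM.
{ have E := HE iN iBm iN iM. 
  rewrite !sum6 !cE /ctab /= in E. clear - E h003. lra. }
have h412 : D iBm iAp iAm = 0.
{ have E := HE iN iBm iAp iAm. have A0 := Hsk iN iAp iAp.
  rewrite !sum6 !cE /ctab /= in E. clear - E A0. lra. }
have h413 : D iBm iAp iBp = 0.
{ have E := HE iN iBm iAp iBp. 
  rewrite !sum6 !cE /ctab /= in E. clear - E . lra. }
have h414 : D iBm iAp iBm = (-2%:R) * D iN iN iAp.
{ have E := HE iN iBm iAp iBm. have A0 := Hsk iN iAp iN.
  rewrite !sum6 !cE /ctab /= in E. clear - E A0. lra. }
have h415 : D iBm iAp iM = (2%:R / 3%:R) * D iN iAp iBp.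
{ have E := HE iN iBm iAp iM. 
  rewrite !sum6 !cE /ctab /= in E. clear - E . lra. }
have h423 : D iBm iAm iBp = (2%:R / 3%:R) * D iN iAp iBp.
{ have E := HE iN iBm iAm iBp. 
  rewrite !sum6 !cE /ctab /= in E. clear - E . lra. }
have h424 : D iBm iAm iBm = 0.
{ have E := HE iN iBm iAm iBm. have A1 := Hsk iN iAm iN.
  rewrite !sum6 !cE /ctab /= in E. clear - E A1 h002 h014. lra. }
have h425 : D iBm iAm iM = 2%:R * D iN iAp iM.
{ have E := HE iN iBm iAm iM. 
  rewrite !sum6 !cE /ctab /= in E. clear - E h023. lra. }
have h434 : D iBm iBp iBm = 0.
{ have E := HE iN iBm iBp iBm. have A0 := Hsk iN iBp iN.
  rewrite !sum6 !cE /ctab /= in E. clear - E A0 h003. lra. }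
have h435 : D iBm iBp iM = 0.
{ have E := HE iN iBm iBp iM. have A0 := Hsk iN iBp iBp.
  rewrite !sum6 !cE /ctab /= in E. clear - E A0. lra. }
have h501 : D iM iN iAp = 0.
{ have E := HE iN iM iN iAp. 
  rewrite !sum6 !cE /ctab /= in E. clear - E . lra. }
have h502 : D iM iN iAm = 0.
{ have E := HE iN iM iN iAm. 
  rewrite !sum6 !cE /ctab /= in E. clear - E . lra. }
have h503 : D iM iN iBp = 0.
{ have E := HE iN iM iN iBp. 
  rewrite !sum6 !cE /ctab /= in E. clear - E . lra. }
have h504 : D iM iN iBm = 0.
{ have E := HE iN iM iN iBm. 
  rewrite !sum6 !cE /ctab /= in E. clear - E . lra. }
have h513 : D iM iAp iBp = 0.
{ have E := HE iN iM iAp iBp. 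
  rewrite !sum6 !cE /ctab /= in E. clear - E . lra. }
have h514 : D iM iAp iBm = 0.
{ have E := HE iN iM iAp iBm. 
  rewrite !sum6 !cE /ctab /= in E. clear - E . lra. }
have h515 : D iM iAp iM = 0.
{ have E := HE iN iM iAp iM. 
  rewrite !sum6 !cE /ctab /= in E. clear - E . lra. }
have h523 : D iM iAm iBp = 0.
{ have E := HE iN iM iAm iBp. 
  rewrite !sum6 !cE /ctab /= in E. clear - E . lra. }
have h524 : D iM iAm iBm = 0.
{ have E := HE iN iM iAm iBm. 
  rewrite !sum6 !cE /ctab /= in E. clear - E . lra. }
have h525 : D iM iAm iM = 0.
{ have E := HE iN iM iAm iM. 
  rewrite !sum6 !cE /ctab /= in E. clear - E . lra. }
have h535 : D iM iBp iM = 0.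
{ have E := HE iN iM iBp iM. 
  rewrite !sum6 !cE /ctab /= in E. clear - E . lra. }
have h545 : D iM iBm iM = 0.
{ have E := HE iN iM iBm iM. 
  rewrite !sum6 !cE /ctab /= in E. clear - E . lra. }
have h012 : D iN iAp iAm = 0.
{ have E := HE iAp iN iAp iM. have A2 := H1 iAp iM.
  rewrite !sum6 !cE /ctab /= in E. clear - E A2 h005. lra. }
have h534 : D iM iBp iBm = 0.
{ have E := HE iAp iAm iBp iBm. 
  rewrite !sum6 !cE /ctab /= in E. clear - E . lra. }
have h303 : D iBp iN iBp = 0.
{ have E := HE iAp iBp iAp iBp. have A0 := H1 iAp iN. have A1 := H1 iAm iBp.
  rewrite !sum6 !cE /ctab /= in E. clear - E A0 A1. lra. }
have h445 : D iBm iBm iM = 1 * D iAm iAm iM.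
{ have E := HE iAp iBm iAm iM. have A0 := H1 iAp iM. have A1 := H1 iAm iBp. have A3 := Hsk iBm iAm iAm.
  rewrite !sum6 !cE /ctab /= in E. clear - E A0 A1 A3. lra. }
have h202 : D iAm iN iAm = 0.
{ have E := HE iAm iBp iAm iBp. have A0 := H1 iAm iBp. have A1 := Hsk iAm iAm iN.
  rewrite !sum6 !cE /ctab /= in E. clear - E A0 A1 h303. lra. }
have h214 : D iAm iAp iBm = 0.
{ have E := HE iBp iAm iN iAp. have A0 := H1 iN iAp. have A2 := Hsk iAm iBm iAp.
  rewrite !sum6 !cE /ctab /= in E. clear - E A0 A2 h202 h303. lra. }
have h335 : D iBp iBp iM = (-1) * D iAm iAm iM.
{ have E := HE iBp iAm iAp iM. have A0 := H1 iAp iM. have A3 := Hsk iBp iAp iAp.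
  rewrite !sum6 !cE /ctab /= in E. clear - E A0 A3 h214. lra. }
have h512 : D iM iAp iAm = 0.
{ have E := HE iBp iBm iAp iAm. have A1 := Hsk iBp iAp iAp. have A2 := Hsk iBm iAm iAm.
  rewrite !sum6 !cE /ctab /= in E. clear - E A1 A2 h012. lra. }
have h404 : D iBm iN iBm = 0.
{ have E := HE iBp iBm iBp iBm. have A1 := Hsk iBp iBp iN.
  rewrite !sum6 !cE /ctab /= in E. clear - E A1 h034 h303 h534. lra. }
have h505 : D iM iN iM = 0.
{ have E := HE iBp iBm iM iN. have A0 := Hsk iN iM iN. have A1 := Hsk iBp iBp iN. have A2 := Hsk iBp iM iBp. have A3 := Hsk iBm iBm iN. have A4 := Hsk iBm iM iBm. have A5 := Hsk iM iM iN.
  rewrite !sum6 !cE /ctab /= in E. clear - E A0 A1 A2 A3 A4 A5 h005 h303 h335 h404 h445. lra. }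
move=> k a b; elim/ord6P: k; elim/ord6P: a; elim/ord6P: b; rewrite /dtab /=.
- have A := Hsk iN iN iN. clear - A. lra.
- clear - H1. lra.
- clear - h002. lra.
- clear - h003. lra.
- clear - h004. lra.
- clear - h005. lra.
- have A := Hsk iN iAp iN. clear - A. lra.
- have A := Hsk iN iAp iAp. clear - A. lra.
- clear - h012. lra.
- clear - H1. lra.
- clear - h014. lra.
- clear - H1. lra.
- have A := Hsk iN iAm iN. clear - A h002. lra.
- have A := Hsk iN iAm iAp. clear - A h012. lra.
- have A := Hsk iN iAm iAm. clear - A. lra.
- clear - h023. lra.
- clear - h024. lra.
- clear - H1. lra.
- have A := Hsk iN iBp iN. clear - A h003. lra.
- have A := Hsk iN iBp iAp. clear - A. lra.
- have A := Hsk iN iBp iAm. clear - A h023. lra.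
- have A := Hsk iN iBp iBp. clear - A. lra.
- clear - h034. lra.
- clear - H1. lra.
- have A := Hsk iN iBm iN. clear - A h004. lra.
- have A := Hsk iN iBm iAp. clear - A h014. lra.
- have A := Hsk iN iBm iAm. clear - A h024. lra.
- have A := Hsk iN iBm iBp. clear - A h034. lra.
- have A := Hsk iN iBm iBm. clear - A. lra.
- clear - h045. lra.
- have A := Hsk iN iM iN. clear - A h005. lra.
- have A := Hsk iN iM iAp. clear - A. lra.
- have A := Hsk iN iM iAm. clear - A. lra.
- have A := Hsk iN iM iBp. clear - A. lra.
- have A := Hsk iN iM iBm. clear - A h045. lra.
- have A := Hsk iN iM iM. clear - A. lra.
- have A := H1 iN iN. clear - A. lra.
- have A := H1 iN iAp. clear - A. lra.
- have A := H1 iN iAm. clear - A. lra.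
- have A := H1 iN iBp. clear - A. lra.
- have A := H1 iN iBm. clear - A. lra.
- have A := H1 iN iM. clear - A. lra.
- have A := H1 iAp iN. clear - A. lra.
- have A := H1 iAp iAp. clear - A. lra.
- have A := H1 iAp iAm. clear - A. lra.
- have A := H1 iAp iBp. clear - A. lra.
- have A := H1 iAp iBm. clear - A. lra.
- have A := H1 iAp iM. clear - A. lra.
- have A := H1 iAm iN. clear - A. lra.
- have A := H1 iAm iAp. clear - A. lra.
- have A := H1 iAm iAm. clear - A. lra.
- have A := H1 iAm iBp. clear - A. lra.
- have A := H1 iAm iBm. clear - A. lra.
- have A := H1 iAm iM. clear - A. lra.
- have A := H1 iBp iN. clear - A. lra.
- have A := H1 iBp iAp. clear - A. lra.
- have A := H1 iBp iAm. clear - A. lra.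
- have A := H1 iBp iBp. clear - A. lra.
- have A := H1 iBp iBm. clear - A. lra.
- have A := H1 iBp iM. clear - A. lra.
- have A := H1 iBm iN. clear - A. lra.
- have A := H1 iBm iAp. clear - A. lra.
- have A := H1 iBm iAm. clear - A. lra.
- have A := H1 iBm iBp. clear - A. lra.
- have A := H1 iBm iBm. clear - A. lra.
- have A := H1 iBm iM. clear - A. lra.
- have A := H1 iM iN. clear - A. lra.
- have A := H1 iM iAp. clear - A. lra.
- have A := H1 iM iAm. clear - A. lra.
- have A := H1 iM iBp. clear - A. lra.
- have A := H1 iM iBm. clear - A. lra.
- have A := H1 iM iM. clear - A. lra.
- have A := Hsk iAm iN iN. clear - A. lra.
- clear - h201. lra.
- clear - h202. lra.
- clear - h203. lra.
- clear - h204. lra.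
- clear - h205. lra.
- have A := Hsk iAm iAp iN. clear - A h201. lra.
- have A := Hsk iAm iAp iAp. clear - A. lra.
- clear - h212. lra.
- clear - h213. lra.
- clear - h214. lra.
- clear - h215. lra.
- have A := Hsk iAm iAm iN. clear - A h202. lra.
- have A := Hsk iAm iAm iAp. clear - A h212. lra.
- have A := Hsk iAm iAm iAm. clear - A. lra.
- clear - h223. lra.
- clear - h224. lra.
- clear - H1. lra.
- have A := Hsk iAm iBp iN. clear - A h203. lra.
- have A := Hsk iAm iBp iAp. clear - A h213. lra.
- have A := Hsk iAm iBp iAm. clear - A h223. lra.
- have A := Hsk iAm iBp iBp. clear - A. lra.
- clear - h234. lra.
- clear - h235. lra.
- have A := Hsk iAm iBm iN. clear - A h204. lra.
- have A := Hsk iAm iBm iAp. clear - A h214. lra.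
- have A := Hsk iAm iBm iAm. clear - A h224. lra.
- have A := Hsk iAm iBm iBp. clear - A h234. lra.
- have A := Hsk iAm iBm iBm. clear - A. lra.
- clear - h245. lra.
- have A := Hsk iAm iM iN. clear - A h205. lra.
- have A := Hsk iAm iM iAp. clear - A h215. lra.
- have A := Hsk iAm iM iAm. clear - A. lra.
- have A := Hsk iAm iM iBp. clear - A h235. lra.
- have A := Hsk iAm iM iBm. clear - A h245. lra.
- have A := Hsk iAm iM iM. clear - A. lra.
- have A := Hsk iBp iN iN. clear - A. lra.
- clear - h301. lra.
- clear - h302. lra.
- clear - h303. lra.
- clear - h304. lra.
- clear - h305. lra.
- have A := Hsk iBp iAp iN. clear - A h301. lra.
- have A := Hsk iBp iAp iAp. clear - A. lra.
- clear - h312. lra.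
- clear - h313. lra.
- clear - h314. lra.
- clear - h315. lra.
- have A := Hsk iBp iAm iN. clear - A h302. lra.
- have A := Hsk iBp iAm iAp. clear - A h312. lra.
- have A := Hsk iBp iAm iAm. clear - A. lra.
- clear - h323. lra.
- clear - h324. lra.
- clear - h325. lra.
- have A := Hsk iBp iBp iN. clear - A h303. lra.
- have A := Hsk iBp iBp iAp. clear - A h313. lra.
- have A := Hsk iBp iBp iAm. clear - A h323. lra.
- have A := Hsk iBp iBp iBp. clear - A. lra.
- clear - h334. lra.
- clear - h335. lra.
- have A := Hsk iBp iBm iN. clear - A h304. lra.
- have A := Hsk iBp iBm iAp. clear - A h314. lra.
- have A := Hsk iBp iBm iAm. clear - A h324. lra.
- have A := Hsk iBp iBm iBp. clear - A h334. lra.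
- have A := Hsk iBp iBm iBm. clear - A. lra.
- clear - h345. lra.
- have A := Hsk iBp iM iN. clear - A h305. lra.
- have A := Hsk iBp iM iAp. clear - A h315. lra.
- have A := Hsk iBp iM iAm. clear - A h325. lra.
- have A := Hsk iBp iM iBp. clear - A h335. lra.
- have A := Hsk iBp iM iBm. clear - A h345. lra.
- have A := Hsk iBp iM iM. clear - A. lra.
- have A := Hsk iBm iN iN. clear - A. lra.
- clear - h401. lra.
- clear - h402. lra.
- clear - h403. lra.
- clear - h404. lra.
- clear - h405. lra.
- have A := Hsk iBm iAp iN. clear - A h401. lra.
- have A := Hsk iBm iAp iAp. clear - A. lra.
- clear - h412. lra.
- clear - h413. lra.
- clear - h414. lra.
- clear - h415. lra.
- have A := Hsk iBm iAm iN. clear - A h402. lra.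
- have A := Hsk iBm iAm iAp. clear - A h412. lra.
- have A := Hsk iBm iAm iAm. clear - A. lra.
- clear - h423. lra.
- clear - h424. lra.
- clear - h425. lra.
- have A := Hsk iBm iBp iN. clear - A h403. lra.
- have A := Hsk iBm iBp iAp. clear - A h413. lra.
- have A := Hsk iBm iBp iAm. clear - A h423. lra.
- have A := Hsk iBm iBp iBp. clear - A. lra.
- clear - h434. lra.
- clear - h435. lra.
- have A := Hsk iBm iBm iN. clear - A h404. lra.
- have A := Hsk iBm iBm iAp. clear - A h414. lra.
- have A := Hsk iBm iBm iAm. clear - A h424. lra.
- have A := Hsk iBm iBm iBp. clear - A h434. lra.
- have A := Hsk iBm iBm iBm. clear - A. lra.
- clear - h445. lra.
- have A := Hsk iBm iM iN. clear - A h405. lra.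
- have A := Hsk iBm iM iAp. clear - A h415. lra.
- have A := Hsk iBm iM iAm. clear - A h425. lra.
- have A := Hsk iBm iM iBp. clear - A h435. lra.
- have A := Hsk iBm iM iBm. clear - A h445. lra.
- have A := Hsk iBm iM iM. clear - A. lra.
- have A := Hsk iM iN iN. clear - A. lra.
- clear - h501. lra.
- clear - h502. lra.
- clear - h503. lra.
- clear - h504. lra.
- clear - h505. lra.
- have A := Hsk iM iAp iN. clear - A h501. lra.
- have A := Hsk iM iAp iAp. clear - A. lra.
- clear - h512. lra.
- clear - h513. lra.
- clear - h514. lra.
- clear - h515. lra.
- have A := Hsk iM iAm iN. clear - A h502. lra.
- have A := Hsk iM iAm iAp. clear - A h512. lra.
- have A := Hsk iM iAm iAm. clear - A. lra.
- clear - h523. lra.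
- clear - h524. lra.
- clear - h525. lra.
- have A := Hsk iM iBp iN. clear - A h503. lra.
- have A := Hsk iM iBp iAp. clear - A h513. lra.
- have A := Hsk iM iBp iAm. clear - A h523. lra.
- have A := Hsk iM iBp iBp. clear - A. lra.
- clear - h534. lra.
- clear - h535. lra.
- have A := Hsk iM iBm iN. clear - A h504. lra.
- have A := Hsk iM iBm iAp. clear - A h514. lra.
- have A := Hsk iM iBm iAm. clear - A h524. lra.
- have A := Hsk iM iBm iBp. clear - A h534. lra.
- have A := Hsk iM iBm iBm. clear - A. lra.
- clear - h545. lra.
- have A := Hsk iM iM iN. clear - A h505. lra.
- have A := Hsk iM iM iAp. clear - A h515. lra.
- have A := Hsk iM iM iAm. clear - A h525. lra.
- have A := Hsk iM iM iBp. clear - A h535. lra.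
- have A := Hsk iM iM iBm. clear - A h545. lra.
- have A := Hsk iM iM iM. clear - A. lra.
Qed.

Lemma lin_decomp (d : {linear g R -> gg R}) X : d X = \sum_(k < 6) X 0 k *: d (e R k).
Proof. by rewrite {1}(row_sum_delta X) linear_sum; apply: eq_bigr => k _; rewrite linearZ. Qed.

Lemma act2E X t a b : act2 X t a b = \sum_(k < 6) X 0 k * act2 (e R k) t a b.
Proof. rewrite sum6 !act2eE {1}/act2 mxE /adm !sum6 !cE /=; ring. Qed.

Definition K p (t : gg R) a b := \sum_(l < 6) c R p l a * t l b + \sum_(l < 6) t a l * c R p l b.

Lemma act2K X t a b : act2 X t a b = \sum_(p < 6) X 0 p * K p t a b.
Proof. by rewrite act2E; apply: eq_bigr => p _; rewrite act2eE. Qed.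

Lemma act2r (a1 a3 a4 a5 b3 c1 : R) X a b :
  act2 X (rmat a1 a3 a4 a5 b3 c1) a b = \sum_(k < 6) X 0 k * dtab a1 a3 a4 a5 b3 c1 k a b.
Proof. by rewrite act2E; apply: eq_bigr => k _; rewrite dtabE. Qed.

Lemma Klin p (y : g R) (T : 'I_6 -> gg R) (t : gg R) a b :
  (forall l b, t l b = \sum_(q < 6) y 0 q * T q l b) ->
  K p t a b = \sum_(q < 6) y 0 q * K p (T q) a b.
Proof.
move=> Ht; rewrite /K.
rewrite (eq_bigr (fun l => c R p l a * \sum_(q < 6) y 0 q * T q l b)); last by move=> l _; rewrite Ht.
rewrite [X in _ + X = _](eq_bigr (fun l => (\sum_(q < 6) y 0 q * T q a l) * c R p l b)); last by move=> l _; rewrite Ht.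
rewrite !sum6; ring.
Qed.

Lemma bracketE x y k : bracket x y 0 k = \sum_(p < 6) \sum_(q < 6) x 0 p * y 0 q * c R p q k.
Proof.
rewrite /bracket summxE; apply: eq_bigr => p _; rewrite summxE; apply: eq_bigr => q _.
by rewrite mxE.
Qed.

Lemma bracketE0 i j k : bracket (e R i) (e R j) 0 k = c R i j k.
Proof.
rewrite bracketE !sum6 !mxE !cE.
elim/ord6P: i; elim/ord6P: j; rewrite /=; ring.
Qed.

Lemma subE (A B : gg R) a b : (A - B) a b = A a b - B a b.
Proof. by rewrite !mxE. Qed.

Lemma addrowE (u v : g R) i : (u + v) 0 i = u 0 i + v 0 i.
Proof. by rewrite !mxE. Qed.

Lemma zerorowE i : (0 : g R) 0 i = 0.
Proof. by rewrite !mxE. Qed.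

Lemma G1 (A B : 'I_6 -> R) (C : 'I_6 -> R) (cc : 'I_6 -> 'I_6 -> 'I_6 -> R) :
  \sum_(k < 6) (\sum_(p < 6) \sum_(q < 6) A p * B q * cc p q k) * C k =
  \sum_(p < 6) \sum_(q < 6) A p * B q * (\sum_(k < 6) cc p q k * C k).
Proof.
transitivity (\sum_(k < 6) \sum_(p < 6) \sum_(q < 6) A p * B q * (cc p q k * C k)).
  apply: eq_bigr => k _; rewrite mulr_suml; apply: eq_bigr => p _; rewrite mulr_suml.
  by apply: eq_bigr => q _; rewrite mulrA.
rewrite exchange_big; apply: eq_bigr => p _; rewrite exchange_big; apply: eq_bigr => q _.
by rewrite mulr_sumr.
Qed.

Lemma G2 (x y : 'I_6 -> R) (Z : 'I_6 -> 'I_6 -> R) :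
  \sum_(p < 6) \sum_(q < 6) x p * y q * (Z p q - Z q p) =
  \sum_(p < 6) x p * (\sum_(q < 6) y q * Z p q) - \sum_(q < 6) y q * (\sum_(p < 6) x p * Z q p).
Proof. rewrite !sum6; ring. Qed.

Definition oK (a1 a3 a4 a5 b3 c1 : R) (p q a b : 'I_6) : option R :=
  oadd (osum (fun l => omul (ctabO p l a) (dtabO a1 a3 a4 a5 b3 c1 q l b)))
       (osum (fun l => omul (dtabO a1 a3 a4 a5 b3 c1 q a l) (ctabO p l b))).
Lemma oCoc0 (a1 a3 a4 a5 b3 c1 : R) (p q a b : 'I_6) :
  oval (osum (fun k => omul (ctabO p q k) (dtabO a1 a3 a4 a5 b3 c1 k a b))) =
  oval (oadd (oK a1 a3 a4 a5 b3 c1 p q a b) (oneg (oK a1 a3 a4 a5 b3 c1 q p a b))).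
Proof.
rewrite /oK /osum.
elim/ord6P: p; elim/ord6P: q; elim/ord6P: a; elim/ord6P: b; rewrite /=.
all: first [reflexivity | ring].
Qed.

Lemma osum_mulE (F G : 'I_6 -> option R) :
  oval (osum (fun j => omul (F j) (G j))) = \sum_(j < 6) oval (F j) * oval (G j).
Proof. by rewrite osumE; apply: eq_bigr => j _; rewrite omulE. Qed.

Lemma coc_basis (a1 a3 a4 a5 b3 c1 : R) (p q a b : 'I_6) :
  \sum_(k < 6) c R p q k * dtab a1 a3 a4 a5 b3 c1 k a b =
  K p (act2 (e R q) (rmat a1 a3 a4 a5 b3 c1)) a b - K q (act2 (e R p) (rmat a1 a3 a4 a5 b3 c1)) a b.
Proof.
have HK : forall p q, K p (act2 (e R q) (rmat a1 a3 a4 a5 b3 c1)) a b = oval (oK a1 a3 a4 a5 b3 c1 p q a b).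
  move=> p' q'; rewrite /oK oaddE !osum_mulE /K.
  by congr (_ + _); apply: eq_bigr => l _; rewrite dtabE cE.
have HL : \sum_(k < 6) c R p q k * dtab a1 a3 a4 a5 b3 c1 k a b =
          oval (osum (fun k => omul (ctabO p q k) (dtabO a1 a3 a4 a5 b3 c1 k a b))).
  by rewrite osum_mulE; apply: eq_bigr => k _; rewrite cE.
have H := oCoc0 a1 a3 a4 a5 b3 c1 p q a b.
by rewrite HL !HK H [LHS]oaddE onegE.
Qed.

Lemma Tdecomp (d : g R -> gg R) (D : 'I_6 -> 'I_6 -> 'I_6 -> R)
  (HD : forall k a b, d (e R k) a b = D k a b) (u v w : g R) i :
  dualbr d (dualbr d u v) w 0 i =
  \sum_(p < 6) \sum_(q < 6) \sum_(l < 6) u 0 p * v 0 q * w 0 l * (\sum_(j < 6) D j p q * D i j l).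
Proof.
rewrite mxE.
transitivity (\sum_(j < 6) \sum_(l < 6) \sum_(p < 6) \sum_(q < 6) u 0 p * v 0 q * w 0 l * (D j p q * D i j l)).
  apply: eq_bigr => j _; apply: eq_bigr => l _.
  rewrite mxE HD -mulrA mulr_suml; apply: eq_bigr => p _; rewrite mulr_suml; apply: eq_bigr => q _.
  rewrite HD; ring.
transitivity (\sum_(j < 6) \sum_(p < 6) \sum_(q < 6) \sum_(l < 6) u 0 p * v 0 q * w 0 l * (D j p q * D i j l)).
  apply: eq_bigr => j _; rewrite exchange_big; apply: eq_bigr => p _; by rewrite exchange_big.
rewrite exchange_big; apply: eq_bigr => p _; rewrite exchange_big; apply: eq_bigr => q _.
rewrite exchange_big; apply: eq_bigr => l _; by rewrite mulr_sumr.
Qed.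

Lemma G3 (f h k : 'I_6 -> R) (W : 'I_6 -> 'I_6 -> 'I_6 -> R)
  (HW : forall p q l, W p q l + W q l p + W l p q = 0) :
  \sum_(p < 6) \sum_(q < 6) \sum_(l < 6) f p * h q * k l * W p q l
  + \sum_(p < 6) \sum_(q < 6) \sum_(l < 6) h p * k q * f l * W p q l
  + \sum_(p < 6) \sum_(q < 6) \sum_(l < 6) k p * f q * h l * W p q l = 0.
Proof.
have E2 : \sum_(p < 6) \sum_(q < 6) \sum_(l < 6) h p * k q * f l * W p q l
        = \sum_(a < 6) \sum_(b < 6) \sum_(c < 6) f a * h b * k c * W b c a.
  rewrite (eq_bigr (fun p => \sum_(l < 6) \sum_(q < 6) h p * k q * f l * W p q l)); last first.
    by move=> p _; rewrite exchange_big.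
  rewrite exchange_big; apply: eq_bigr => l _; apply: eq_bigr => p _; apply: eq_bigr => q _; ring.
have E3 : \sum_(p < 6) \sum_(q < 6) \sum_(l < 6) k p * f q * h l * W p q l
        = \sum_(a < 6) \sum_(b < 6) \sum_(c < 6) f a * h b * k c * W c a b.
  rewrite exchange_big; apply: eq_bigr => q _; rewrite exchange_big; apply: eq_bigr => l _.
  apply: eq_bigr => p _; ring.
rewrite E2 E3 -!big_split /=; apply: big1 => a _; rewrite -!big_split /=; apply: big1 => b _.
rewrite -!big_split /=; apply: big1 => c _.
by rewrite -!mulrDr HW mulr0.
Qed.

Definition oJ (a1 a3 a4 a5 b3 c1 : R) (i p q l : 'I_6) : option R :=
  oadd (oadd (osum (fun j => omul (dtabO a1 a3 a4 a5 b3 c1 j p q) (dtabO a1 a3 a4 a5 b3 c1 i j l)))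
             (osum (fun j => omul (dtabO a1 a3 a4 a5 b3 c1 j q l) (dtabO a1 a3 a4 a5 b3 c1 i j p))))
       (osum (fun j => omul (dtabO a1 a3 a4 a5 b3 c1 j l p) (dtabO a1 a3 a4 a5 b3 c1 i j q))).

Lemma oJ0 (a1 a3 a4 a5 b3 c1 : R) : a1 * a4 + a5 * c1 = 0 -> forall i p q l,
  oval (oJ a1 a3 a4 a5 b3 c1 i p q l) = 0.
Proof.
move=> HQ i p q l; rewrite /oJ /osum.
elim/ord6P: i; elim/ord6P: p; elim/ord6P: q; elim/ord6P: l; rewrite /=.
all: first [reflexivity | lra].
Qed.

Lemma jac_basis (a1 a3 a4 a5 b3 c1 : R) : a1 * a4 + a5 * c1 = 0 -> forall i p q l : 'I_6,
  let D := dtab a1 a3 a4 a5 b3 c1 in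
  (\sum_(j < 6) D j p q * D i j l) + (\sum_(j < 6) D j q l * D i j p)
  + (\sum_(j < 6) D j l p * D i j q) = 0.
Proof.
move=> HQ i p q l D; apply: (eq_trans _ (oJ0 a3 b3 HQ i p q l)).
by rewrite /oJ [oval (oadd (oadd _ _) _)]oaddE [oval (oadd (osum _) (osum _))]oaddE !osum_mulE.
Qed.

Definition oS (a1 a3 a4 a5 b3 c1 : R) (a b d : 'I_6) : option R :=
  oadd (oadd (osum (fun i => osum (fun k => omul (omul (rtabO a1 a3 a4 a5 b3 c1 i b) (rtabO a1 a3 a4 a5 b3 c1 k d)) (ctabO i k a))))
             (osum (fun j => osum (fun k => omul (omul (rtabO a1 a3 a4 a5 b3 c1 a j) (rtabO a1 a3 a4 a5 b3 c1 k d)) (ctabO j k b)))))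
       (osum (fun j => osum (fun l => omul (omul (rtabO a1 a3 a4 a5 b3 c1 a j) (rtabO a1 a3 a4 a5 b3 c1 b l)) (ctabO j l d)))).

Lemma oS_eq (a1 a3 a4 a5 b3 c1 : R) (a b d : 'I_6) :
  oval (oS a1 a3 a4 a5 b3 c1 a b d) = stab (a1 * b3 - c1 ^+ 2) (a1 * a4 + a5 * c1) a b d.
Proof.
rewrite /oS /osum /stab.
elim/ord6P: a; elim/ord6P: b; elim/ord6P: d; rewrite /=.
all: first [reflexivity | ring].
Qed.

Lemma osum2E (F G H : 'I_6 -> 'I_6 -> option R) :
  oval (osum (fun i => osum (fun k => omul (omul (F i k) (G i k)) (H i k)))) =
  \sum_(i < 6) \sum_(k < 6) oval (F i k) * oval (G i k) * oval (H i k).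
Proof.
rewrite osumE; apply: eq_bigr => i _; rewrite osumE; apply: eq_bigr => k _.
by rewrite !omulE.
Qed.

Lemma stabE (a1 a3 a4 a5 b3 c1 : R) (a b d : 'I_6) :
  schouten (rmat a1 a3 a4 a5 b3 c1) a b d = stab (a1 * b3 - c1 ^+ 2) (a1 * a4 + a5 * c1) a b d.
Proof.
rewrite -(oS_eq a1 a3) /oS [oval (oadd (oadd _ _) _)]oaddE [oval (oadd (osum _) (osum _))]oaddE !osum2E.
rewrite /schouten; congr (_ + _ + _); apply: eq_bigr => i _; apply: eq_bigr => k _.
all: by rewrite !rmatE cE.
Qed.

Lemma stab00 (a b d : 'I_6) : stab 0 0 a b d = 0.
Proof. rewrite /stab; elim/ord6P: a; elim/ord6P: b; elim/ord6P: d; rewrite /=; first [reflexivity | ring]. Qed.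

Definition oA (P : R) (x : g R) (a b d : 'I_6) : option R :=
  oadd (oadd (osum (fun i => osum (fun m => omul (omul (Some (x 0 m)) (ctabO m i a)) (stabO P 0 i b d))))
             (osum (fun i => osum (fun m => omul (omul (Some (x 0 m)) (ctabO m i b)) (stabO P 0 a i d)))))
       (osum (fun i => osum (fun m => omul (omul (Some (x 0 m)) (ctabO m i d)) (stabO P 0 a b i)))).

Lemma oA0 (P : R) x (a b d : 'I_6) : oval (oA P x a b d) = 0.
Proof.
rewrite /oA /osum.
elim/ord6P: a; elim/ord6P: b; elim/ord6P: d; rewrite /=.
all: first [reflexivity | ring].
Qed.

Lemma stab_inv (P : R) x (a b d : 'I_6) : act3 x (fun a b d => stab P 0 a b d) a b d = 0.
Proof.
apply: (eq_trans _ (oA0 P x a b d)).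
rewrite /oA [oval (oadd (oadd _ _) _)]oaddE [oval (oadd (osum _) (osum _))]oaddE !osum2E /act3 /adm.
congr (_ + _ + _); apply: eq_bigr => i _; rewrite mulr_suml; apply: eq_bigr => m _.
all: by rewrite cE.
Qed.

Lemma act3_ext x (T T' : 'I_6 -> 'I_6 -> 'I_6 -> R) a b d :
  (forall a b d, T a b d = T' a b d) -> act3 x T a b d = act3 x T' a b d.
Proof. by move=> H; rewrite /act3 !sum6 !H. Qed.

Lemma part2 (a1 a3 a4 a5 b3 c1 : R) : a1 * a4 + a5 * c1 = 0 ->
     (cybe (rmat a1 a3 a4 a5 b3 c1) <-> a1 * b3 - c1 ^+ 2 = 0) /\
     (a1 * b3 - c1 ^+ 2 != 0 -> standard (rmat a1 a3 a4 a5 b3 c1)).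
Proof.
move=> HQ.
have Hc : cybe (rmat a1 a3 a4 a5 b3 c1) -> a1 * b3 - c1 ^+ 2 = 0.
  by move=> H; have := H iAp iAm iM; rewrite stabE /stab /= mul1r.
split; first split => //.
  by move=> HP a b d; rewrite stabE HP HQ stab00.
move=> HP; split; first by move/Hc; apply/eqP.
move=> x a b d.
rewrite (@act3_ext x _ (fun a b d => stab (a1 * b3 - c1 ^+ 2) 0 a b d)).
  exact: stab_inv.
by move=> ? ? ?; rewrite stabE HQ.
Qed.

Lemma opprowE (u : g R) i : (- u) 0 i = - u 0 i.
Proof. by rewrite !mxE. Qed.

Lemma backward (d : {linear g R -> gg R}) (a1 a3 a4 a5 b3 c1 : R) :
  a1 * a4 + a5 * c1 = 0 -> (forall X, d X = act2 X (rmat a1 a3 a4 a5 b3 c1)) ->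
  lie_bialgebra d /\ d (Ap R) = 0.
Proof.
move=> HQ H.
have HD : forall k a b, d (e R k) a b = dtab a1 a3 a4 a5 b3 c1 k a b.
  by move=> k a b; rewrite H dtabE.
split; last first.
  by apply/matrixP => a b; rewrite /Ap HD /dtab /= mxE.
split.
  move=> x y; rewrite !H; apply/matrixP => a b.
  rewrite subE act2r !act2K.
  under eq_bigr => k _ do rewrite bracketE.
  rewrite G1.
  under eq_bigr => p _ do under eq_bigr => q _ do rewrite coc_basis.
  rewrite [X in _ = X - _](eq_bigr (fun p => x 0 p * \sum_(q < 6) y 0 q * K p (act2 (e R q) (rmat a1 a3 a4 a5 b3 c1)) a b)); last first.
    by move=> p _; rewrite (@Klin p y (fun q => act2 (e R q) (rmat a1 a3 a4 a5 b3 c1))) // => l b'; exact: act2E.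
  rewrite [X in _ = _ - X](eq_bigr (fun p => y 0 p * \sum_(q < 6) x 0 q * K p (act2 (e R q) (rmat a1 a3 a4 a5 b3 c1)) a b)); last first.
    by move=> p _; rewrite (@Klin p x (fun q => act2 (e R q) (rmat a1 a3 a4 a5 b3 c1))) // => l b'; exact: act2E.
  exact: (G2 (fun p => x 0 p) (fun q => y 0 q) (fun p q => K p (act2 (e R q) (rmat a1 a3 a4 a5 b3 c1)) a b)).
split.
  move=> f h; apply/rowP => i; rewrite opprowE !mxE !sum6 !HD.
  by elim/ord6P: i; rewrite /dtab /=; ring.
move=> f h k; apply/rowP => i.
rewrite !addrowE zerorowE !(Tdecomp HD).
apply: (@G3 (fun p => f 0 p) (fun q => h 0 q) (fun l => k 0 l)
          (fun p q l => \sum_(j < 6) dtab a1 a3 a4 a5 b3 c1 j p q * dtab a1 a3 a4 a5 b3 c1 i j l)).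
move=> p q l; exact: (jac_basis a3 b3 HQ i p q l).
Qed.

Lemma cocE (d : {linear g R -> gg R}) : cocycle d -> forall i j a b,
  \sum_(k < 6) c R i j k * d (e R k) a b =
     (\sum_(l < 6) c R i l a * d (e R j) l b + \sum_(l < 6) d (e R j) a l * c R i l b)
   - (\sum_(l < 6) c R j l a * d (e R i) l b + \sum_(l < 6) d (e R i) a l * c R j l b).
Proof.
move=> H i j a b; have := H (e R i) (e R j); move/matrixP/(_ a b).
rewrite lin_decomp subE !act2eE summxE => <-.
by apply: eq_bigr => k _; rewrite mxE bracketE0.
Qed.

Lemma dualbr_e (d : g R -> gg R) a b k : dualbr d (e R a) (e R b) 0 k = d (e R k) a b.
Proof. rewrite mxE !sum6 !mxE; elim/ord6P: a; elim/ord6P: b; rewrite /=; ring. Qed.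

Lemma sum_e_r (c0 : 'I_6) (A : R) (F : 'I_6 -> R) :
  \sum_(l < 6) A * e R c0 0 l * F l = A * F c0.
Proof. rewrite sum6 !mxE; elim/ord6P: c0; rewrite /=; ring. Qed.

Lemma Tbasis (d : g R -> gg R) (a b c0 i : 'I_6) :
  dualbr d (dualbr d (e R a) (e R b)) (e R c0) 0 i =
  \sum_(j < 6) d (e R j) a b * d (e R i) j c0.
Proof.
rewrite mxE; apply: eq_bigr => j _.
rewrite dualbr_e; exact: (@sum_e_r c0 (d (e R j) a b) (fun l => d (e R i) j l)).
Qed.

Lemma forward (d : {linear g R -> gg R}) : lie_bialgebra d -> d (Ap R) = 0 ->
  exists a1 a3 a4 a5 b3 c1 : R,
    a1 * a4 + a5 * c1 = 0 /\ forall X : g R, d X = act2 X (rmat a1 a3 a4 a5 b3 c1).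
Proof.
move=> [Hco [Hanti Hjac]] HAp.
have Hsk : forall k a b, d (e R k) a b = - d (e R k) b a.
  move=> k a b; have := Hanti (e R a) (e R b); move/rowP/(_ k).
  by rewrite opprowE !dualbr_e.
have H1 : forall a b, d (e R iAp) a b = 0.
  by move=> a b; rewrite -/(Ap R) HAp mxE.
have HD := @solveD (fun k a b => d (e R k) a b) (cocE Hco) Hsk H1.
set A1 := d (e R iN) iN iAp.
set A3 := d (e R iN) iAp iM.
set A4 := d (e R iN) iBp iM.
set A5 := d (e R iN) iAp iBp.
set B3 := d (e R iN) iAm iM.
set C1 := d (e R iAm) iAm iM.
have HD' : forall k a b, d (e R k) a b =
   dtab A1 A3 (A4 / 2%:R) (A5 / 3%:R) (- B3) (C1 / 2%:R) k a b := HD.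
exists A1, A3, (A4 / 2%:R), (A5 / 3%:R), (- B3), (C1 / 2%:R).
split.
  have := Hjac (e R iN) (e R iAp) (e R iM); move/rowP/(_ iBm).
  rewrite !addrowE zerorowE !Tbasis !sum6 !HD' /dtab /=.
  move=> HJ; lra.
move=> X; rewrite lin_decomp; apply/matrixP => a b; rewrite summxE act2E.
by apply: eq_bigr => k _; rewrite mxE HD' dtabE.
Qed.
End S.

Theorem mainTheorem2 (R : realFieldType) :
  (forall delta : {linear g R -> gg R},
     (lie_bialgebra delta /\ delta (Ap R) = 0) <->
     (exists a1 a3 a4 a5 b3 c1 : R,
        a1 * a4 + a5 * c1 = 0 /\
        forall X : g R, delta X = act2 X (rmat a1 a3 a4 a5 b3 c1)))
  /\
  (forall a1 a3 a4 a5 b3 c1 : R, a1 * a4 + a5 * c1 = 0 ->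
     (cybe (rmat a1 a3 a4 a5 b3 c1) <-> a1 * b3 - c1 ^+ 2 = 0) /\
     (a1 * b3 - c1 ^+ 2 != 0 -> standard (rmat a1 a3 a4 a5 b3 c1))).
Proof.
split.
  move=> delta; split.
    by move=> [Hl HAp]; exact: forward.
  by move=> [a1 [a3 [a4 [a5 [b3 [c1 [HQ HX]]]]]]]; exact: (backward HQ HX).
move=> a1 a3 a4 a5 b3 c1 HQ; exact: part2.
Qed.
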